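(* Let $K=\mathrm{GF}(2)(x)[Y]/(Y^2+xY+1)$ and $\rho$ the residue class of $Y$. For every $k\ge1$, $$x\,f^{(2k-2)}(x,1)=x\,f^{(2k-1)}(x,1)=(1+\rho)\rho^k+(1+\rho^{-1})\rho^{-k}.$$
   Context: $\mathbb{F}=\mathrm{GF}(2)$, $R=\mathbb{F}[x,z]$, $|\cdot|$ is total degree. Let $(r_0,r_1,\ldots)$ be the binary sequence with $r_i=1$ if $i=2^j-1$ for some $j\ge 0$ and $r_i=0$ otherwise. For $n\ge1$ its inverse form is $R^{(1-n)}=\sum_{j=1-n}^{0}r_{-j}\,x^{j}z^{1-n-j}\in\mathbb{F}[x^{-1},z^{-1}]$. For a form $f\in R$ and such a form $G$, $\Delta(f;G)$ is the coefficient of $x^{|f|+|G|}z^0$ in $f\cdot G$ computed in $\mathbb{F}[x^{\pm1},z^{\pm1}]$ if $|f|+|G|\le 0$, and $0$ otherwise. Define forms recursively: $(f^{(0)},g^{(0)})=(x+z,z)$; for $k\ge0$ let $d_k=|g^{(k)}|-|f^{(k)}|$ and $\Delta_k=\Delta(f^{(k)};R^{(-1-k)})$, and set $(f^{(k+1)},g^{(k+1)})=(f^{(k)},zg^{(k)})$ if $\Delta_k=0$; $=(f^{(k)}+x^{-d_k}g^{(k)},\,zg^{(k)})$ if $\Delta_k=1$ and $d_k\le0$; $=(x^{d_k}f^{(k)}+g^{(k)},\,zf^{(k)})$ if $\Delta_k=1$ and $d_k>0$. *)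

(* Defs.v *)
From HB Require Import structures.
From mathcomp Require Import all_boot all_order all_algebra.
From mathcomp Require Import fraction.
From mathcomp Require Import mpoly.

Set Implicit Arguments.
Unset Strict Implicit.
Unset Printing Implicit Defensive.

Import Order.TTheory GRing.Theory Num.Theory.
Local Open Scope ring_scope.

Notation F := 'F_2.

(* Forms: elements of R = F[x,z], variable 0 is x, variable 1 is z. *)
Notation form := {mpoly F[2]}.
Definition xi : 'I_2 := ord0.
Definition zi : 'I_2 := ord_max.

(* Total degree |f| (msize f = 1 + total degree for f <> 0). *)
Definition tdeg (f : form) : nat := (msize f).-1.

(* r_i = 1 iff i = 2^j - 1 for some j >= 0, i.e. i+1 is a power of 2
   (such a j is necessarily < i+2). *)
Definition r (i : nat) : F :=
  if [exists j : 'I_(i.+2), i.+1 == (2 ^ j)%N] then 1 else 0.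

(* Coefficient of x^a z^b in the inverse form
   R^(1-n) = sum_{j=1-n}^{0} r_{-j} x^j z^{1-n-j}  (a Laurent form). *)
Definition Rinv_coef (n : nat) (a b : int) : F :=
  if ((1 - n%:Z <= a) && (a <= 0)) && (a + b == 1 - n%:Z)
  then r `|a|%N else 0.

Definition Rinv_deg (n : nat) : int := 1 - n%:Z.

(* Delta(f; R^(1-n)): the coefficient of x^(|f|+|G|) z^0 in f*G
   computed in F[x^+-1, z^+-1] if |f|+|G| <= 0, and 0 otherwise.
   The coefficient of x^e z^0 in f*G is
   sum over monomials m of f of f_m * G_{(e - m_x, 0 - m_z)}. *)
Definition Delta (f : form) (n : nat) : F :=
  let e := (tdeg f)%:Z + Rinv_deg n in
  if e <= 0 then
    \sum_(m <- msupp f) f@_m * Rinv_coef n (e - (m xi)%:Z) (0 - (m zi)%:Z)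
  else 0.

(* The recursion: fg k = (f^(k), g^(k)). *)
Fixpoint fg (k : nat) : form * form :=
  match k with
  | 0 => ('X_xi + 'X_zi, 'X_zi)
  | k'.+1 =>
    let: (f, g) := fg k' in
    let d : int := (tdeg g)%:Z - (tdeg f)%:Z in
    if Delta f (k'.+2) == 0 then (f, 'X_zi * g)          (* R^(-1-k') = R^(1-(k'+2)) *)
    else if d <= 0 then (f + 'X_xi ^+ `|d|%N * g, 'X_zi * g)
    else ('X_xi ^+ `|d|%N * f + g, 'X_zi * f)
  end.

Definition fk (k : nat) : form := (fg k).1.
Definition gk (k : nat) : form := (fg k).2.

(* Dehomogenisation f(x,1) in F[x]. *)
Definition at_z1 (f : form) : {poly F} :=
  mmap (@polyC F) (fun i : 'I_2 => if i == xi then 'X else 1) f.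

Notation Fx := {fraction {poly F}}.
Definition minP : {poly Fx} := 'X^2 + (tofrac 'X)%:P * 'X + 1.
Notation K := {poly %/ minP}.
Definition rho : K := 'qX.

Definition toK (p : {poly F}) : K := (tofrac p)%:A.

(* Main.v *)
Require Import Defs.
From HB Require Import structures.
From mathcomp Require Import all_boot all_order all_algebra.
From mathcomp Require Import fraction mpoly.
From mathcomp Require Import zify ring.
Import GRing.Theory.
Local Open Scope ring_scope.

Lemma F2b (a : F) : a + a = 0.
Proof. have h2 : (2%:R : F) = 0 by apply/eqP. by rewrite -mulr2n -mulr_natr h2 mulr0. Qed.

Lemma P2b (p : {poly F}) : p + p = 0.
Proof. by apply/polyP => i; rewrite coefD coef0 F2b. Qed.

Lemma sqrD2 (p q : {poly F}) : (p + q) ^+ 2 = p ^+ 2 + q ^+ 2.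
Proof. by rewrite sqrrD mulr2n P2b addr0. Qed.

Lemma r01 i : r i = 0 \/ r i = 1.
Proof. by rewrite /r; case: ifP; [right|left]. Qed.

Lemma r_sq i : r i * r i = r i.
Proof. by case: (r01 i) => ->; rewrite ?mulr0 ?mulr1. Qed.

Lemma r0 : r 0 = 1.
Proof. rewrite /r; case: ifP => //; move/negbT/existsP; case; by exists ord0. Qed.

Lemma r_even i : r (2 * i + 2) = 0.
Proof.
rewrite /r; case: ifP => // /existsP [[j hj]] /= /eqP.
case: j hj => [|j] _; first by rewrite expn0; lia.
rewrite expnS; lia.
Qed.

Lemma r_odd i : r (2 * i + 1) = r i.
Proof.
rewrite /r; congr (if _ then _ else _); apply/existsP/existsP.
- case=> [[j hj]] /= /eqP.
  case: j hj => [|j] hj; first by rewrite expn0; lia.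
  rewrite expnS => e.
  have hi : i.+1 = (2 ^ j)%N by lia.
  have hjl : (j < 2 ^ j)%N by apply: ltn_expl.
  have hj' : (j < i.+2)%N by lia.
  by exists (Ordinal hj'); apply/eqP.
- case=> [[j hj]] /= /eqP e.
  have hjl : (j < 2 ^ j)%N by apply: ltn_expl.
  have hj' : (j.+1 < (2 * i + 1).+2)%N by lia.
  by exists (Ordinal hj'); apply/eqP => /=; rewrite expnS; lia.
Qed.

(* the polynomials P n = f^(2n-2)(x,1) shifted *)
Fixpoint P (n : nat) : {poly F} :=
  match n with
  | 0 => 1
  | 1 => 'X + 1
  | S ((S m) as k) => 'X * P k + P m
  end.

Lemma P_SS n : P n.+2 = 'X * P n.+1 + P n. Proof. by []. Qed.

Lemma size_P n : (size (P n) <= n.+1)%N.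
Proof.
elim: n {-2}n (leqnn n) => [|n IH] [|[|m]] hm //.
- by rewrite size_poly1.
- by rewrite size_poly1.
- by rewrite /= size_XaddC.
- rewrite P_SS; apply: leq_trans (size_polyD _ _) _; rewrite geq_max; apply/andP; split.
  + apply: leq_trans (size_polyMleq _ _) _; rewrite size_polyX.
    have := IH m.+1 ltac:(lia); lia.
  + have := IH m ltac:(lia); lia.
Qed.

Lemma lead_P n : (P n)`_n = 1.
Proof.
elim: n {-2}n (leqnn n) => [|n IH] [|[|m]] hm //.
- by rewrite /= coef1.
- by rewrite /= coef1.
- by rewrite /= coefD coefX coef1 addr0.
- rewrite P_SS coefD coefXM /= (IH m.+1); last by lia.
  by rewrite nth_default ?addr0 //; apply: leq_trans (size_P m) _; lia.
Qed.

Definition Uf (N : nat) : {poly F} := \poly_(i < N) r i.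

Definition eqc (N : nat) (p q : {poly F}) := forall i, (i < N)%N -> p`_i = q`_i.

Lemma eqc_refl N p : eqc N p p. Proof. by []. Qed.
Lemma eqc_sym N p q : eqc N p q -> eqc N q p. Proof. by move=> h i hi; rewrite h. Qed.
Lemma eqc_trans N p q s : eqc N p q -> eqc N q s -> eqc N p s.
Proof. by move=> h1 h2 i hi; rewrite h1 ?h2. Qed.
Lemma eqc_add N p q p' q' : eqc N p q -> eqc N p' q' -> eqc N (p + p') (q + q').
Proof. by move=> h1 h2 i hi; rewrite !coefD h1 ?h2. Qed.
Lemma eqc_mul N p q p' q' : eqc N p q -> eqc N p' q' -> eqc N (p * p') (q * q').
Proof.
move=> h1 h2 i hi; rewrite !coefM; apply: eq_bigr => [[k hk]] _ /=.
by rewrite h1 ?h2 //; lia.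
Qed.
Lemma eqc_exp N p q k : eqc N p q -> eqc N (p ^+ k) (q ^+ k).
Proof.
move=> h; elim: k => [|k IH]; first exact: eqc_refl.
by rewrite !exprS; apply: eqc_mul.
Qed.
Lemma eqc_le N N' p q : (N' <= N)%N -> eqc N p q -> eqc N' p q.
Proof. by move=> hN h i hi; apply: h; lia. Qed.

Lemma Uf_eqc N N' : eqc (minn N N') (Uf N) (Uf N').
Proof. move=> i hi; rewrite !coef_poly; case: ifP; case: ifP => //; lia. Qed.

Lemma Uf_coef N i : (i < N)%N -> (Uf N)`_i = r i.
Proof. by move=> hi; rewrite coef_poly hi. Qed.

Lemma Uf_indep N N' a k i : (i < N)%N -> (i < N')%N ->
  ('X^a * Uf N ^+ k)`_i = ('X^a * Uf N' ^+ k)`_i.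
Proof.
move=> h1 h2; apply: (@eqc_mul (minn N N')); last by rewrite leq_min h1.
  exact: eqc_refl.
exact/eqc_exp/Uf_eqc.
Qed.

Lemma Uf_sq N : Uf N ^+ 2 = \sum_(i < N) r i *: 'X^(2 * i).
Proof.
rewrite /Uf poly_def; elim: N => [|N IH]; first by rewrite !big_ord0 expr0n.
rewrite !big_ord_recr /= sqrD2 IH; congr (_ + _).
by rewrite exprZn expr2 r_sq -exprM mulnC.
Qed.

Lemma frob N : eqc N ('X * Uf N ^+ 2) (Uf N + 1).
Proof.
move=> j hj; rewrite Uf_sq mulr_sumr.
under eq_bigr do rewrite -scalerAr -exprS.
rewrite coef_sumMXn coefD coef1 Uf_coef //.
case: j hj => [|j] hj.
  rewrite big1 ?r0 ?F2b // => i /eqP; lia.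
have := odd_double_half j; set k := j./2; case: (odd j) => /= e.
-
  have -> : j.+1 = (2 * k + 2)%N by rewrite -e; lia.
  rewrite big1 ?r_even ?addr0 // => i /eqP; lia.
- have hk : (k < N)%N by lia.
  rewrite (bigD1 (Ordinal hk)) /=; last by apply/eqP; lia.
  rewrite big1 ?addr0.
    by rewrite -(r_odd k); congr r; lia.
  move=> i /andP [/eqP he hne]; exfalso; move/eqP: hne; apply.
  by apply: val_inj => /=; lia.
Qed.

Definition Ev (M : nat) (p : {poly F}) (c : nat) : F := \sum_(i < M) p`_i * r (c + i).

Lemma Ev_add M p q c : Ev M (p + q) c = Ev M p c + Ev M q c.
Proof. by rewrite /Ev -big_split; apply: eq_bigr => i _; rewrite coefD mulrDl. Qed.

Lemma Ev_mulX M p c : Ev M.+1 ('X * p) c = Ev M p c.+1.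
Proof.
rewrite /Ev big_ord_recl coefXM /= mul0r add0r; apply: eq_bigr => i _.
by rewrite coefXM /= addSnnS.
Qed.

Lemma Ev_widen M k (p : {poly F}) c : (size p <= M)%N -> Ev (M + k) p c = Ev M p c.
Proof.
move=> hs; elim: k => [|k IH]; first by rewrite addn0.
rewrite addnS /Ev big_ord_recr /= -/(Ev _ _ _) IH nth_default ?mul0r ?addr0 //.
exact: leq_trans hs (leq_addr _ _).
Qed.

Lemma coef0_exp (p : {poly F}) k : (p ^+ k)`_0 = p`_0 ^+ k.
Proof. by elim: k => [|k IH]; rewrite ?expr0 ?coef1 // !exprS coef0M IH. Qed.

Lemma KEY0 c N : (c.+2 <= N)%N ->
  Ev 1 (P 0) c = ('X^1 * Uf N ^+ (2 * 0).+1)`_c.+1.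
Proof.
move=> hN; rewrite /Ev big_ord1 /= coef1 mul1r expr1 expr1 coefXM /=.
by rewrite addn0 Uf_coef //; lia.
Qed.

Lemma KEY n c N : (c.+2 <= N)%N ->
  Ev n.+1 (P n) c = ('X^(n.+1) * Uf N ^+ (2 * n).+1)`_c.+1.
Proof.
elim: n {-2}n (leqnn n) c N => [|n IH] [|[|m]] hm c N hN //.
- exact: KEY0.
- exact: KEY0.
-
  set U := Uf N.
  have h1 : eqc N ('X^2 * U ^+ (2 * 1).+1) (U + 1 + 'X * U).
    have -> : 'X^2 * U ^+ (2 * 1).+1 = ('X * U) * ('X * U ^+ 2) by ring.
    apply: eqc_trans (_ : eqc N _ (('X * U) * (U + 1))) _.
      exact/eqc_mul/frob.
    have -> : ('X * U) * (U + 1) = 'X * U ^+ 2 + 'X * U by ring.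
    exact/eqc_add/eqc_refl/frob.
  rewrite h1; last lia.
  rewrite /Ev !big_ord_recr big_ord0 /= add0r !coefD coefX coef1 coefXM /=.
  rewrite !Uf_coef; try lia.
  rewrite !coefX !coef1 /= addn0 addn1; ring.
-
  rewrite P_SS Ev_add Ev_mulX.
  have -> : Ev m.+3 (P m) c = Ev m.+1 (P m) c.
    by rewrite -(Ev_widen _ 2 _ c (size_P m)) addn2.
  rewrite (IH m.+1 _ c.+1 c.+3) ?(IH m _ c c.+3) //; try lia.
  rewrite (Uf_indep N c.+3) //; try lia.
  set U := Uf c.+3.
  rewrite (exprS 'X (m.+1)) -mulrA coefXM /= -coefD -mulrDr.
  have e1 : 'X^(m.+3) * U ^+ (2 * m.+2).+1 =
      'X^(m.+1) * ((('X * U ^+ 2) ^+ 2) * U ^+ (2 * m).+1).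
    have -> : ('X * U ^+ 2) ^+ 2 = 'X^2 * U ^+ 4 by rewrite exprMn -exprM.
    rewrite [in RHS]mulrA [in RHS]mulrA -[in RHS]exprD -[in RHS]mulrA -[in RHS]exprD.
    by congr (_ ^+ _ * _ ^+ _); lia.
  have e2 : U ^+ (2 * m.+1).+1 + U ^+ (2 * m).+1 = (U + 1) ^+ 2 * U ^+ (2 * m).+1.
    rewrite sqrD2 expr1n mulrDl mul1r -exprD.
    by congr (_ ^+ _ + _); lia.
  rewrite e1 e2; symmetry; apply: (@eqc_mul c.+3); [exact: eqc_refl| |lia].
  apply: eqc_mul; last exact: eqc_refl.
  exact/eqc_exp/frob.
Qed.

Lemma DeltaA n : Ev n.+2 (P n.+1) n = 0.
Proof. by rewrite (KEY _ _ n.+2) // coefXnM ifT. Qed.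

Lemma DeltaB n : Ev n.+2 (P n.+1) n.+1 = 1.
Proof.
rewrite (KEY _ _ n.+3) // coefXnM ltnn subnn coef0_exp Uf_coef // r0.
exact: expr1n.
Qed.

Definition xh : K := toK 'X.

Lemma toKM p q : toK (p * q) = toK p * toK q.
Proof.
rewrite /toK rmorphM /= -scalerA.
by rewrite -[X in _ *: X = _](mul1r ((tofrac q) *: (1 : K))) scalerAl.
Qed.
Lemma toKD p q : toK (p + q) = toK p + toK q.
Proof. by rewrite /toK rmorphD scalerDl. Qed.
Lemma toK1 : toK 1 = 1.
Proof. by rewrite /toK rmorph1 scale1r. Qed.

Lemma K2 (a : K) : a + a = 0.
Proof.
have h : (1 + 1 : K) = 0 by rewrite -toK1 -toKD P2b /toK rmorph0 scale0r.
by rewrite -{1 2}[a]mulr1 -mulrDr h mulr0.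
Qed.

Lemma size_minP_low : (size (((tofrac ('X : {poly F}))%:P * 'X + 1)%R : {poly Fx}) <= 2)%N.
Proof.
apply: leq_trans (size_polyD _ _) _; rewrite geq_max size_poly1 andbT.
apply: leq_trans (size_polyMleq _ _) _; rewrite size_polyX addn2 /=.
exact: size_polyC_leq1.
Qed.

Lemma minP_monic : minP \is monic.
Proof.
rewrite /minP -addrA; apply/monicP; rewrite lead_coefDl ?lead_coefXn //.
rewrite size_polyXn; exact: leq_ltn_trans size_minP_low _.
Qed.

Lemma size_minP : size minP = 3.
Proof.
rewrite /minP -addrA size_polyDl ?size_polyXn //.
exact: leq_ltn_trans size_minP_low _.
Qed.

Lemma mk_monic_minP : mk_monic minP = minP.
Proof. by rewrite /mk_monic size_minP minP_monic. Qed.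

Lemma rho_eq : rho ^+ 2 + xh * rho + 1 = 0.
Proof.
have hc : xh = in_qpoly minP ((tofrac 'X)%:P).
  by rewrite /xh /toK -alg_polyC linearZ /= rmorph1.
rewrite hc /rho /qpolyX -rmorphXn -rmorphM -rmorphD -(rmorph1 (in_qpoly minP)) -rmorphD.
apply: val_inj => /=.
rewrite mk_monic_minP.
exact: (Pdiv.RingMonic.rmodpp minP_monic).
Qed.

Lemma oppK2 (a : K) : - a = a.
Proof. by apply/esym/eqP; rewrite -addr_eq0 K2. Qed.

Lemma rho2 : rho ^+ 2 = xh * rho + 1.
Proof. by apply/eqP; rewrite -[xh * rho + 1]oppK2 -addr_eq0 addrA rho_eq. Qed.

Lemma rho_inv : rho^-1 = rho + xh.
Proof.
apply: mulr1_eq; rewrite mulrDr -expr2 rho2 mulrC addrC addrA.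
by rewrite K2 add0r.
Qed.

Lemma s2 : rho^-1 ^+ 2 = xh * rho^-1 + 1.
Proof.
rewrite rho_inv sqrrD mulr2n K2 addr0 rho2.
by rewrite mulrDr addrAC -expr2.
Qed.

Lemma rs : rho + rho^-1 = xh.
Proof. by rewrite rho_inv addrA K2 add0r. Qed.

Lemma rec2 (t : K) : t ^+ 2 = xh * t + 1 -> forall k, t ^+ k.+2 = xh * t ^+ k.+1 + t ^+ k.
Proof.
move=> h k; rewrite -[k.+2]/(2 + k)%N exprD h mulrDl mul1r exprS mulrA.
by [].
Qed.


Lemma step_id (R : comNzRingType) (x r s a b c d : R) :
  x * ((1 + r) * a + (1 + s) * c) + ((1 + r) * b + (1 + s) * d) =
  (1 + r) * (x * a + b) + (1 + s) * (x * c + d).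
Proof. ring. Qed.

Lemma base0_id (R : comNzRingType) (r s : R) :
  1 + r + (1 + s) = (1 + 1) + (r + s).
Proof. ring. Qed.

Lemma base1_id (R : comNzRingType) (r s : R) :
  (1 + r) * r + (1 + s) * s = r + r ^+ 2 + (s + s ^+ 2).
Proof. ring. Qed.

Lemma base1_id2 (R : comNzRingType) (x r s : R) :
  r + (x * r + 1) + (s + (x * s + 1)) = (1 + x) * (r + s) + (1 + 1).
Proof. ring. Qed.

Lemma toK_XP k : toK ('X * P k) = (1 + rho) * rho ^+ k + (1 + rho^-1) * rho ^- k.
Proof.
rewrite -exprVn; set s := rho^-1.
elim: k {-2}k (leqnn k) => [|n IH] [|[|m]] hm //.
- rewrite mulr1 !expr0 !mulr1 -/xh base0_id.
  by rewrite rs K2 add0r.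
- rewrite mulr1 !expr0 !mulr1 -/xh base0_id.
  by rewrite rs K2 add0r.
- rewrite /= toKM toKD toK1 -/xh !expr1 base1_id.
  rewrite rho2 s2 base1_id2.
  by rewrite rs K2 addr0 mulrC addrC.
- rewrite P_SS mulrDr toKD toKM -/xh (IH m.+1) ?(IH m); try lia.
  by rewrite (rec2 _ rho2) (rec2 _ s2) step_id.
Qed.

Fixpoint Fm (n : nat) : {mpoly F[2]} :=
  match n with
  | 0 => 1
  | 1 => 'X_xi + 'X_zi
  | S ((S m) as k) => 'X_xi * Fm k + 'X_zi * ('X_zi * Fm m)
  end.

Lemma Fm_SS n : Fm n.+2 = 'X_xi * Fm n.+1 + 'X_zi * ('X_zi * Fm n). Proof. by []. Qed.

Lemma at_z1M p q : at_z1 (p * q) = at_z1 p * at_z1 q.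
Proof. by rewrite /at_z1 rmorphM. Qed.
Lemma at_z1D p q : at_z1 (p + q) = at_z1 p + at_z1 q.
Proof. by rewrite /at_z1 rmorphD. Qed.

Lemma at_z1X : at_z1 'X_xi = 'X.
Proof. by rewrite /at_z1 mmapX mmap1U. Qed.
Lemma at_z1Z : at_z1 'X_zi = 1.
Proof. by rewrite /at_z1 mmapX mmap1U. Qed.

Lemma at_z1_Fm n : at_z1 (Fm n) = P n.
Proof.
elim: n {-2}n (leqnn n) => [|n IH] [|[|m]] hm //.
- by rewrite /at_z1 rmorph1.
- by rewrite /at_z1 rmorph1.
- by rewrite /= at_z1D at_z1X at_z1Z.
- rewrite Fm_SS P_SS !(at_z1D, at_z1M) at_z1X at_z1Z !mul1r (IH m.+1) ?(IH m) //; lia.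
Qed.

Definition cf (n a b : nat) : F := if (a + b == n)%N then (P n)`_a else 0.

Lemma cf_rec n a b : cf n.+2 a b =
  (if (0 < a)%N then cf n.+1 (a - 1) b else 0) +
  (if (0 < b)%N then (if (0 < b - 1)%N then cf n a (b - 1 - 1) else 0) else 0).
Proof.
rewrite /cf P_SS coefD coefXM; set Q := P n.+1.
have sz k : (n < k)%N -> (P n)`_k = 0.
  by move=> hk; rewrite nth_default //; apply: leq_trans (size_P n) _.
case: a => [|a]; case: b => [|[|b]] /=.
- by rewrite addr0.
- by rewrite addr0.
- rewrite !add0r; have -> : (b.+2 == n.+2) = (b.+2 - 1 - 1 == n)%N by apply/eqP/eqP; lia.
  by [].
- have -> : (a.+1 - 1 + 0 == n.+1)%N = (a.+1 + 0 == n.+2)%N by apply/eqP/eqP; lia.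
  rewrite addr0; case: eqP => h //; rewrite subn1 /= sz ?addr0 //; lia.
- have -> : (a.+1 - 1 + 1 == n.+1)%N = (a.+1 + 1 == n.+2)%N by apply/eqP/eqP; lia.
  rewrite addr0; case: eqP => h //; rewrite subn1 /= sz ?addr0 //; lia.
- have -> : (a.+1 - 1 + b.+2 == n.+1)%N = (a.+1 + b.+2 == n.+2)%N by apply/eqP/eqP; lia.
  have -> : (a.+1 + (b.+2 - 1 - 1) == n)%N = (a.+1 + b.+2 == n.+2)%N by apply/eqP/eqP; lia.
  by case: eqP => h; rewrite ?addr0 // subn1.
Qed.

Lemma mcoeff_Xi (i : 'I_2) (p : {mpoly F[2]}) (m : 'X_{1..2}) :
  ('X_i * p)@_m = if (0 < m i)%N then p@_(m - U_(i))%MM else 0.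
Proof.
case: ifP => h.
- have e : m = (U_(i) + (m - U_(i)))%MM.
    apply/mnmP => j; rewrite mnmDE mnmBE mnm1E.
    by case: eqP => [<-|] /=; lia.
  by rewrite {1}e mulrC mcoeffMX.
- apply: memN_msupp_eq0; rewrite mulrC (perm_mem (msuppMX _ _)).
  apply/mapP => [[m' _ e]]; move: h; rewrite e mnmDE mnm1E eqxx; lia.
Qed.

Lemma xizi : (xi == zi) = false. Proof. by []. Qed.
Lemma zixi : (zi == xi) = false. Proof. by []. Qed.

Lemma ord2P (j : 'I_2) : j = xi \/ j = zi.
Proof. by case: j => [[|[|j]] hj]; [left|right|]; try apply: val_inj. Qed.

Lemma mnm_eq2 (m m' : 'X_{1..2}) : (m == m') = (m xi == m' xi) && (m zi == m' zi).
Proof.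
apply/eqP/andP => [->|[/eqP h1 /eqP h2]]; first by [].
by apply/mnmP => j; case: (ord2P j) => ->.
Qed.

Lemma coefFm n (m : 'X_{1..2}) : (Fm n)@_m = cf n (m xi) (m zi).
Proof.
elim: n {-2}n (leqnn n) m => [|n IH] [|[|k]] hk m //.
- rewrite mcoeff1 /cf mnm_eq2 !mnm0E /= coef1.
  by case: (m xi) => [|a]; case: (m zi) => [|b].
- rewrite mcoeff1 /cf mnm_eq2 !mnm0E /= coef1.
  by case: (m xi) => [|a]; case: (m zi) => [|b].
- rewrite /= mcoeffD !mcoeffX /cf !mnm_eq2 !mnm1E eqxx xizi zixi /= coefD coefX coef1.
  case: (m xi) => [|[|a]]; case: (m zi) => [|[|b]] //=; rewrite ?addr0 ?add0r //.
- rewrite Fm_SS mcoeffD !mcoeff_Xi cf_rec.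
  rewrite !(IH k.+1) ?(IH k) ?mcoeff_Xi; try lia.
  rewrite !mnmBE !mnm1E eqxx xizi zixi !subn0.
  done.
Qed.

Definition mono (a b : nat) : 'X_{1..2} := [multinom (if i == xi then a else b) | i < 2].
Lemma mono_xi a b : mono a b xi = a. Proof. by rewrite mnmE. Qed.
Lemma mono_zi a b : mono a b zi = b. Proof. by rewrite mnmE. Qed.

Lemma md2 (m : 'X_{1..2}) : mdeg m = (m xi + m zi)%N.
Proof.
rewrite mdegE big_ord_recr big_ord1 /=.
by congr (m _ + m _); apply: val_inj.
Qed.

Lemma msize_Fm n : msize (Fm n) = n.+1.
Proof.
apply/eqP; rewrite eqn_leq; apply/andP; split.
- rewrite msizeE; apply/bigmax_leqP_seq => m hm _.
  move: hm; rewrite mcoeff_msupp coefFm /cf; case: ifP => [/eqP h _|_]; last by rewrite eqxx.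
  by rewrite md2 h.
- have : mono n 0 \in msupp (Fm n).
    by rewrite mcoeff_msupp coefFm /cf mono_xi mono_zi addn0 eqxx lead_P oner_neq0.
  by move/msize_mdeg_lt; rewrite md2 mono_xi mono_zi addn0.
Qed.

Lemma tdeg_Fm n : tdeg (Fm n) = n.
Proof. by rewrite /tdeg msize_Fm. Qed.

Lemma msize_Xz (p : {mpoly F[2]}) : p != 0 -> msize ('X_zi * p) = (msize p).+1.
Proof.
move=> hp; rewrite msizeM //; first by rewrite msizeX mdeg1.
by rewrite -msize_poly_eq0 msizeX.
Qed.

Lemma tdeg_XXFm n : tdeg ('X_zi * ('X_zi * Fm n)) = n.+2.
Proof.
have h0 : Fm n != 0 by rewrite -msize_poly_eq0 msize_Fm.
have h1 : 'X_zi * Fm n != 0 by rewrite -msize_poly_eq0 msize_Xz.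
by rewrite /tdeg !msize_Xz // msize_Fm.
Qed.

Lemma sum_msupp_sub (f : {mpoly F[2]}) (G : 'X_{1..2} -> F) (s : seq 'X_{1..2}) :
  uniq s -> {subset msupp f <= s} ->
  \sum_(m <- msupp f) f@_m * G m = \sum_(m <- s) f@_m * G m.
Proof.
move=> us sub.
rewrite [RHS](bigID (fun m => m \in msupp f)) /= [X in _ + X]big1 ?addr0; last first.
  by move=> m /memN_msupp_eq0 ->; rewrite mul0r.
rewrite -[RHS]big_filter; apply: perm_big; apply: uniq_perm; [exact: msupp_uniq|exact: filter_uniq|].
move=> m; rewrite mem_filter; apply/idP/andP => [h|[]//]; by split; [|apply: sub].
Qed.

Lemma fg_S k : fg k.+1 =
    let: (f, g) := fg k in
    let d : int := (tdeg g)%:Z - (tdeg f)%:Z in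
    if Delta f (k.+2) == 0 then (f, 'X_zi * g)
    else if d <= 0 then (f + 'X_xi ^+ `|d|%N * g, 'X_zi * g)
    else ('X_xi ^+ `|d|%N * f + g, 'X_zi * f).
Proof. by []. Qed.

Lemma Delta_Fm n N : (n < N)%N -> Delta (Fm n) N = Ev n.+1 (P n) (N - 1 - n).
Proof.
move=> hN; rewrite /Delta tdeg_Fm ifT; last by rewrite /Rinv_deg; lia.
rewrite (sum_msupp_sub _ _ [seq mono i (n - i) | i <- iota 0 n.+1]).
- rewrite big_map /Ev -(big_mkord xpredT (fun i => (P n)`_i * r (N - 1 - n + i))).
  rewrite /index_iota subn0 [RHS]big_seq [LHS]big_seq; apply: eq_bigr => i.
  rewrite mem_iota => /andP [_ hi].
  rewrite coefFm mono_xi mono_zi /cf ifT; last by apply/eqP; lia.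
  congr (_ * _); rewrite /Rinv_coef /Rinv_deg ifT.
    congr r; lia.
  apply/andP; split; [apply/andP; split|apply/eqP]; lia.
- rewrite map_inj_uniq ?iota_uniq // => i j /(congr1 (fun m : 'X_{1..2} => m xi)).
  by rewrite !mono_xi.
- move=> m; rewrite mcoeff_msupp coefFm /cf; case: ifP => [/eqP h _|_]; last by rewrite eqxx.
  apply/mapP; exists (m xi); first by rewrite mem_iota; lia.
  by apply/mnmP => j; case: (ord2P j) => ->; rewrite ?mono_xi ?mono_zi //; lia.
Qed.

Lemma fg_step n : fg (2 * n) = (Fm n.+1, 'X_zi * Fm n) ->
  fg (2 * n).+1 = (Fm n.+1, 'X_zi * ('X_zi * Fm n)).
Proof.
move=> IH; rewrite fg_S IH; cbv beta iota zeta; rewrite Delta_Fm; last by lia.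
have -> : ((2 * n).+2 - 1 - n.+1 = n)%N by lia.
by rewrite DeltaA eqxx.
Qed.

Lemma fg_even n : fg (2 * n) = (Fm n.+1, 'X_zi * Fm n).
Proof.
elim: n => [|n IH]; first by rewrite /= mulr1.
have -> : (2 * n.+1 = (2 * n).+2)%N by lia.
rewrite fg_S (fg_step _ IH); cbv beta iota zeta; rewrite Delta_Fm; last by lia.
have -> : ((2 * n).+3 - 1 - n.+1 = n.+1)%N by lia.
rewrite DeltaB oner_eq0 tdeg_XXFm tdeg_Fm.
have -> : ((n.+2)%:Z - (n.+1)%:Z = 1 :> int)%R by lia.
by rewrite /= expr1.
Qed.

Theorem theorem4 (k : nat) : (1 <= k)%N ->
  toK ('X * at_z1 (fk (2 * k - 2))) =
    (1 + rho) * rho ^+ k + (1 + rho^-1) * rho ^- k /\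
  toK ('X * at_z1 (fk (2 * k - 1))) =
    (1 + rho) * rho ^+ k + (1 + rho^-1) * rho ^- k.
Proof.
case: k => [//|j] _.
have -> : (2 * j.+1 - 2 = 2 * j)%N by lia.
have -> : (2 * j.+1 - 1 = (2 * j).+1)%N by lia.
rewrite /fk (fg_step _ (fg_even j)) fg_even; cbv beta iota; rewrite at_z1_Fm.
by split; apply: toK_XP.
Qed.
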